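(* Let $u,v\in U^I_{\min}$. The Laurent polynomial $D^I_{uv}(\Lambda)$ has no constant term if $u\ne v$, and has constant term equal to $\big(-(p-1)!\big)^{-(\mu_I+1)}$ if $u=v$.
   Context: $p$ prime, $n\ge1$, $d\ge2$, $I\subseteq\{0,\dots,n\}$; ${\bf a}_1,\dots,{\bf a}_N\in\mathbb{N}^{n+1}$ with coordinate sums $d$, ${\bf a}_j^+=({\bf a}_j,1)\in\mathbb{N}^{n+2}$. $\mu_I$: $\lceil|I|/d\rceil=\mu_I+1$. $U^I_{\min}$: the set of $u\in\mathbb{N}^{n+2}$ with $\sum_{i=0}^nu_i=du_{n+1}$, $u_i>0$ for $i\in I$, and $u_{n+1}=\mu_I+1$. Hypothesis: $N\ge\mu_I+|U^I_{\min}|$ and for each $u\in U^I_{\min}$ there is $k_u$, $1\le k_u\le|U^I_{\min}|$, with $u={\bf a}^+_{\mu_I+k_u}+\sum_{j=1}^{\mu_I}{\bf a}_j^+$. Define $A^I_{uv}(\Lambda)=(-1)^{\mu_I+1}\sum_{\nu\in\mathbb{N}^N,\ \sum_j\nu_j{\bf a}_j^+=pu-v}\Lambda^\nu/(\nu_1!\cdots\nu_N!)$ and $$D^I_{uv}(\Lambda)=\Big(\prod_{j=1}^{\mu_I}\Lambda_j\Big)^{-(p-1)}\Lambda_{\mu_I+k_u}^{-p}\Lambda_{\mu_I+k_v}A^I_{uv}(\Lambda).$$ *)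

(* Defs.v *)
From HB Require Import structures.
From mathcomp Require Import all_boot all_order all_algebra.
From mathcomp Require Import mpoly.
Set Implicit Arguments. Unset Strict Implicit. Unset Printing Implicit Defensive.
Import Order.TTheory GRing.Theory Num.Theory.
Local Open Scope ring_scope.

(* Vectors in N^{n+1} are {ffun 'I_n.+1 -> nat} (coordinates 0..n);
   vectors in N^{n+2} are {ffun 'I_n.+2 -> nat} (coordinate n+1 = ord_max). *)

Definition aplus n (x : {ffun 'I_n.+1 -> nat}) : {ffun 'I_n.+2 -> nat} :=
  [ffun i => if unlift ord_max i is Some i' then x i' else 1%N].

Definition ceil_div (m d : nat) : nat := ((m + d.-1) %/ d)%N.

Definition inUmin n (d : nat) (I : {set 'I_n.+1}) (mu : nat)
    (u : {ffun 'I_n.+2 -> nat}) : bool :=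
  [&& (\sum_(i < n.+1) u (widen_ord (leqnSn n.+1) i) == d * u ord_max)%N,
      [forall i in I, (0 < u (widen_ord (leqnSn n.+1) i))%N]
    & u ord_max == mu.+1].

(* |U^I_min|: every u in U^I_min has all coordinates <= d*(mu+1), so U^I_min is
   in bijection with the finite set below. *)
Definition Umin_card n (d : nat) (I : {set 'I_n.+1}) (mu : nat) : nat :=
  #|[set w : {ffun 'I_n.+2 -> 'I_(d * mu.+1).+1} |
       inUmin d I mu [ffun i => nat_of_ord (w i)]]|.

(* Laurent polynomials over Q in Lambda_1..Lambda_N, represented as
   Lambda^(-lden) * lnum with lden a monomial exponent and lnum a polynomial.
   (Variable 'X_i, i : 'I_N, is Lambda_{i+1}.) *)
Record laurent (N : nat) := Laurent { lden : 'X_{1..N}; lnum : {mpoly rat[N]} }.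

Definition lpoly N (P : {mpoly rat[N]}) : laurent N := Laurent (@mnm0 N) P.

Definition negpart (z : int) : nat := if z < 0 then `|z|%N else 0%N.
Definition pospart (z : int) : nat := if 0 <= z then `|z|%N else 0%N.

(* Laurent monomial prod_{j=1}^N Lambda_j^(e j), e indexed as in the paper (1..N) *)
Definition lmono N (e : nat -> int) : laurent N :=
  Laurent [multinom negpart (e i.+1) | i < N]
          'X_[ [multinom pospart (e i.+1) | i < N] ].

Definition lmul N (L1 L2 : laurent N) : laurent N :=
  Laurent (mnm_add (lden L1) (lden L2)) (lnum L1 * lnum L2).

Definition lcoef N (m : 'I_N -> int) (L : laurent N) : rat :=
  if [forall i, 0 <= m i + (lden L i)%:Z]
  then (lnum L)@_[multinom absz (m i + (lden L i)%:Z)%R | i < N]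
  else 0.

Definition lconst N (L : laurent N) : rat := lcoef (fun _ => 0) L.

(* The sum over nu in N^N with sum_j nu_j a_j^+ = p u - v is finite: looking at
   the last coordinate, sum_j nu_j = p u_{n+1} - v_{n+1} <= p u_{n+1}, so every
   solution lies in the box below. *)
Definition Apoly (p n N : nat) (a : nat -> {ffun 'I_n.+1 -> nat}) (mu : nat)
    (u v : {ffun 'I_n.+2 -> nat}) : {mpoly rat[N]} :=
  ((-1) ^+ mu.+1 : rat) *:
  \sum_(nu : {ffun 'I_N -> 'I_(p * u ord_max).+1} |
          [forall i, (\sum_(j < N) (nu j : nat) * aplus (a j.+1) i)%:Z
                       == (p * u i)%:Z - (v i)%:Z])
     (((\prod_(j < N) (nu j : nat)`!)%:R : rat)^-1 *:
        'X_[ [multinom (nu j : nat) | j < N] ]).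

Definition Dlaurent (p n N : nat) (a : nat -> {ffun 'I_n.+1 -> nat}) (mu : nat)
    (k : {ffun 'I_n.+2 -> nat} -> nat) (u v : {ffun 'I_n.+2 -> nat}) : laurent N :=
  lmul (lmono N (fun j => if (1 <= j <= mu)%N then - (p.-1)%:Z else 0))
  (lmul (lmono N (fun j => if j == (mu + k u)%N then - (p%:Z) else 0))
  (lmul (lmono N (fun j => if j == (mu + k v)%N then 1 else 0))
        (lpoly (Apoly p N a mu u v)))).

(* Main.v *)
Require Import Defs.
From HB Require Import structures.
From mathcomp Require Import all_boot all_order all_algebra.
From mathcomp Require Import mpoly zify.
Import Order.TTheory GRing.Theory Num.Theory.
Local Open Scope ring_scope.

Lemma sumsel N mu ku (g : nat -> nat) : (1 <= ku)%N -> (mu + ku <= N)%N ->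
  (\sum_(j < N) ((j < mu) + (j.+1 == mu + ku)) * g j.+1
   = \sum_(1 <= j < mu.+1) g j + g (mu+ku))%N.
Proof.
move=> k1 kN.
rewrite (eq_bigr (fun j : 'I_N => (j < mu) * g j.+1 + (j.+1 == mu+ku) * g j.+1)%N); last by move=> j _; rewrite mulnDl.
rewrite big_split /=; congr (_ + _)%N.
  rewrite big_add1 /= big_mkord.
  rewrite (big_ord_widen N (fun j => g j.+1)); last by lia.
  rewrite [RHS]big_mkcond /=; apply: eq_bigr => j _.
  by case: (j < mu)%N; rewrite ?mul1n ?mul0n.
have hi : ((mu + ku).-1 < N)%N by lia.
rewrite (bigD1 (Ordinal hi)) //= big1 ?addn0.
  have -> : ((mu + ku).-1.+1 == mu + ku)%N by apply/eqP; lia.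
  by rewrite mul1n; congr g; lia.
move=> j /eqP hj; have -> : (j.+1 == mu + ku) = false.
  apply/negP => /eqP h; apply: hj; apply: val_inj => /=; lia.
by rewrite mul0n.
Qed.

Lemma lconstE N (L : laurent N) : lconst L = (lnum L)@_(lden L).
Proof.
rewrite /lconst /lcoef.
have -> : [forall i, 0 <= 0 + (lden L i)%:Z] by apply/forallP => i; rewrite add0r.
congr mcoeff; apply/mnmP => i; rewrite mnmE add0r absz_nat //.
Qed.

Lemma XAcoef N (T : finType) (P : pred T) (w : T -> rat) (f : T -> 'X_{1..N})
  (c : rat) (E M : 'X_{1..N}) :
  ('X_[E] * (c *: \sum_(t | P t) (w t *: 'X_[f t])))@_M
  = c * \sum_(t | P t) w t * ((E + f t)%MM == M)%:R.
Proof.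
rewrite -scalerAr mcoeffZ; congr (_ * _); rewrite mulr_sumr raddf_sum.
by apply: eq_bigr => t _; rewrite -scalerAr -mpolyXD /= mcoeffZ mcoeffX.
Qed.


Lemma key p n N (a : nat -> {ffun 'I_n.+1 -> nat}) mu
  (k : {ffun 'I_n.+2 -> nat} -> nat) (u v : {ffun 'I_n.+2 -> nat}) (E M : 'X_{1..N}) :
  (1 < p)%N -> (1 <= k u)%N -> (1 <= k v)%N -> (mu + k u <= N)%N -> (mu + k v <= N)%N ->
  u ord_max = mu.+1 ->
  (forall i, u i = aplus (a (mu + k u)%N) i + \sum_(1 <= j < mu.+1) aplus (a j) i)%N ->
  (forall i, v i = aplus (a (mu + k v)%N) i + \sum_(1 <= j < mu.+1) aplus (a j) i)%N ->
  (forall i : 'I_N, E i = (i.+1 == mu + k v)%N) ->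
  (forall i : 'I_N, M i = ((i < mu) * p.-1 + (i.+1 == mu + k u) * p)%N) ->
  (-1) ^+ mu.+1 *
  \sum_(t : {ffun 'I_N -> 'I_(p * u ord_max).+1} | [forall i,
       (\sum_(j < N) (t j : nat) * aplus (a j.+1) i)%:Z == (p * u i)%:Z - (v i)%:Z])
     ((\prod_(j < N) (t j)`!)%:R^-1 *
      ((E + [multinom (t j : nat) | j < N])%MM == M)%:R)
  = (if u == v then (- ((p.-1)`!)%:R) ^- mu.+1 else 0 : rat).
Proof.
move=> p1 ku1 kv1 kuN kvN uo hu hv hE hM.
case: (eqVneq u v) => [e|neq]; last first.
  have kuv : k u != k v.
    apply: contra neq => /eqP e; apply/eqP/ffunP => i; by rewrite hu hv e.
  rewrite big1 ?mulr0 //.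
  move=> t _.
  have hi : ((mu + k v).-1 < N)%N by lia.
  have -> : ((E + [multinom (t j : nat) | j < N])%MM == M) = false.
    apply/negbTE/negP => /eqP/mnmP/(_ (Ordinal hi)).
    rewrite mnmDE mnmE hE hM /=.
    move: kuv; case: eqP => ?; case: ltnP => ?; case: eqP => ?; move=> /eqP ?; lia.
  by rewrite mulr0.
subst v.
have excl : forall j : 'I_N, ((j < mu) + (j.+1 == mu + k u) <= 1)%N.
  by move=> j; case: ltnP => ?; case: eqP => ?; lia.
pose t0 : {ffun 'I_N -> 'I_(p * u ord_max).+1} :=
  [ffun j : 'I_N => inord (((j < mu) + (j.+1 == mu + k u)) * p.-1)%N].
have t0E : forall j, (t0 j : nat) = (((j < mu) + (j.+1 == mu + k u)) * p.-1)%N.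
  move=> j; rewrite ffunE inordK // uo; have := excl j; nia.
have Pt0 : [forall i,
       (\sum_(j < N) (t0 j : nat) * aplus (a j.+1) i)%:Z == (p * u i)%:Z - (u i)%:Z].
  apply/forallP => i; apply/eqP.
  rewrite (eq_bigr (fun j : 'I_N => ((j < mu) + (j.+1 == mu + k u)) * (p.-1 * aplus (a j.+1) i))%N); last first.
    by move=> j _; rewrite t0E mulnA [(_ * p.-1)%N]mulnC -mulnA.
  rewrite (@sumsel N mu (k u) (fun j => (p.-1 * aplus (a j) i)%N)) //.
  rewrite -big_distrr /= -mulnDr addnC -hu.
  lia.
have Et0 : (E + [multinom (t0 j : nat) | j < N])%MM == M.
  apply/eqP/mnmP => i; rewrite mnmDE mnmE t0E hE hM.
  have := excl i; case: ltnP => ?; case: eqP => ?; simpl; lia.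
rewrite (bigD1 t0) //= Et0 [X in _ + X]big1 ?addr0; last first.
  move=> t /andP[_ tne].
  have -> : ((E + [multinom (t j : nat) | j < N])%MM == M) = false.
    apply/negbTE; apply: contra tne => /eqP/mnmP h; apply/eqP/ffunP => j.
    apply: val_inj => /=; move: (h j); rewrite mnmDE mnmE t0E hE hM.
    have := excl j; case: ltnP => ?; case: eqP => ?; lia.
  by rewrite mulr0.
have hprod : (\prod_(j < N) (t0 j)`! = (p.-1)`! ^ mu.+1)%N.
  rewrite (eq_bigr (fun j : 'I_N => (p.-1)`! ^ (((j < mu) + (j.+1 == mu + k u)) * 1)))%N; last first.
    move=> j _; rewrite t0E muln1; have := excl j.
    by case: ((j < mu) + (j.+1 == mu + k u))%N => [|[|]] // _; rewrite ?mul0n ?mul1n ?expn0 ?expn1.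
  by rewrite -expn_sum (@sumsel N mu (k u) (fun _ => 1%N)) // sum_nat_const_nat muln1 subn1 addn1.
rewrite hprod mulr1 natrX [in RHS]exprNn invfM; congr (_ * _); by rewrite -exprVn invrN1.
Qed.

Theorem lemma7p6 (p n d : nat) (I : {set 'I_n.+1}) (N : nat)
  (a : nat -> {ffun 'I_n.+1 -> nat}) (mu : nat)
  (k : {ffun 'I_n.+2 -> nat} -> nat) (u v : {ffun 'I_n.+2 -> nat}) :
  prime p -> (1 <= n)%N -> (2 <= d)%N ->
  (forall j, (1 <= j <= N)%N -> (\sum_(i < n.+1) a j i)%N = d) ->
  ceil_div #|I| d = mu.+1 ->
  (mu + Umin_card d I mu <= N)%N ->
  (forall w, inUmin d I mu w ->
     (1 <= k w <= Umin_card d I mu)%N /\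
     (forall i, w i = aplus (a (mu + k w)%N) i
                      + \sum_(1 <= j < mu.+1) aplus (a j) i)%N) ->
  inUmin d I mu u -> inUmin d I mu v ->
  lconst (Dlaurent p N a mu k u v)
  = if u == v then (- ((p.-1)`!)%:R) ^- mu.+1 else 0.
Proof.
move=> pp n1 d2 ha hmu hN hk uU vU.
have p2 := prime_gt1 pp.
have [/andP[ku1 kuU] hu] := hk u uU; have [/andP[kv1 kvU] hv] := hk v vU.
have uo : u ord_max = mu.+1 by case/and3P: uU => _ _ /eqP.
rewrite lconstE /Dlaurent /= !mulrA -!mpolyXD /Apoly XAcoef.
apply: key => //; try lia.
- move=> i; rewrite !mnmE; move: p2; case: (p) => [|[|q]] // _.
  by case: ifP => _; case: ifP => _; case: ifP => _.
- move=> i; rewrite !mnmDE !mnmE; move: p2; case: (p) => [|[|q]] // _.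
  by case: ifP => _; case: ifP => _; case: ifP => _; rewrite /= ?addn0 ?add0n ?mul1n ?mul0n.
Qed.
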